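(* Let $M$ be a manifold of dimension $m$, and let $X_p$ and $X_s$ be two commuting vector fields on $M$ possessing $m-2$ independent common integrals of motion $H_1,\dots,H_{m-2}$. Let $h(x)=E\,x^2+F\,x+G$ be a quadratic polynomial in $x$ whose coefficients $E,F,G$ are functions on $M$ satisfying the Kowalewski separability conditions \[ E F_s - F E_s = E G_p - G E_p, \qquad E G_s - G E_s = F G_p - G F_p , \] where $E_p=X_p(E)$, $E_s=X_s(E)$, and similarly for $F$ and $G$. Then the roots $x_1,x_2$ of the equation $E x^2+F x+G=0$ are separating coordinates for $X_p$ and $X_s$.
   Context: ''Separating coordinates'' is meant in the following sense: in the coordinate system $(x_1,x_2,H_1,\dots,H_{m-2})$ (adapted to the two-dimensional foliation spanned by $X_p,X_s$), there exist functions $\psi_1,\psi_2$ such that \[ X_s + x_1 X_p = \psi_1\,\frac{\partial}{\partial x_1},\qquad X_s + x_2 X_p = \psi_2\,\frac{\partial}{\partial x_2}, \] with $\psi_1$ independent of $x_2$ and $\psi_2$ independent of $x_1$ (i.e. $\psi_1=\psi_1(x_1,H_1,\dots,H_{m-2})$, $\psi_2=\psi_2(x_2,H_1,\dots,H_{m-2})$). *)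

(* Defs.v *)
(* Local (chart) formulation on an open subset U of R^(n+2). *)
From HB Require Import structures.
From mathcomp Require Import all_boot all_order all_algebra.
From mathcomp Require Import all_classical all_reals all_analysis.
Set Implicit Arguments. Unset Strict Implicit. Unset Printing Implicit Defensive.
Import Order.TTheory GRing.Theory Num.Theory.
Import numFieldNormedType.Exports.
Local Open Scope classical_set_scope.
Local Open Scope ring_scope.

Notation Pt R n := 'rV[R]_(n.+2).

Definition lie {R : realType} {n : nat} (X : Pt R n -> Pt R n) (f : Pt R n -> R)
  : Pt R n -> R := fun x => 'D_(X x) f x.

Fixpoint iterD {R : realType} {n : nat} (vs : seq (Pt R n)) (f : Pt R n -> R)
  : Pt R n -> R :=
  match vs with
  | [::] => f
  | v :: vs' => fun x => 'D_v (iterD vs' f) x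
  end.

Definition smooth_on {R : realType} {n : nat} (U : set (Pt R n)) (f : Pt R n -> R) :=
  forall (vs : seq (Pt R n)) (x : Pt R n), U x -> differentiable (iterD vs f) x.

Definition smooth_field {R : realType} {n : nat} (U : set (Pt R n))
  (X : Pt R n -> Pt R n) :=
  forall i : 'I_n.+2, smooth_on U (fun x => X x ord0 i).

Definition commute_on {R : realType} {n : nat} (U : set (Pt R n))
  (X Y : Pt R n -> Pt R n) :=
  forall f, smooth_on U f -> forall x, U x -> lie X (lie Y f) x = lie Y (lie X f) x.

Definition first_integral {R : realType} {n : nat} (U : set (Pt R n))
  (X : Pt R n -> Pt R n) (H : Pt R n -> R) :=
  forall x, U x -> lie X H x = 0.

Definition indep_at {R : realType} {n k : nat} (x : Pt R n) (phi : 'I_k -> Pt R n -> R) :=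
  forall c : 'I_k -> R,
    (forall v : Pt R n, \sum_(i < k) c i * 'D_v (phi i) x = 0) -> forall i, c i = 0.

Definition coords {R : realType} {n : nat} (x1 x2 : Pt R n -> R)
  (H : 'I_n -> Pt R n -> R) : 'I_n.+2 -> Pt R n -> R :=
  fun k => match @fintype.split 2 n k with
           | inl j => if val j == 0%N then x1 else x2
           | inr i => H i
           end.

Definition idx0 {n : nat} : 'I_n.+2 := @Ordinal n.+2 0 isT.
Definition idx1 {n : nat} : 'I_n.+2 := @Ordinal n.+2 1 isT.

(* Y is the coordinate vector field d/d(phi j) on U *)
Definition coord_field {R : realType} {n : nat} (U : set (Pt R n))
  (phi : 'I_n.+2 -> Pt R n -> R) (j : 'I_n.+2) (Y : Pt R n -> Pt R n) :=
  forall x, U x -> forall k, 'D_(Y x) (phi k) x = (k == j)%:R.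

(* x1, x2 are separating coordinates for Xp, Xs in the coordinate system
   (x1, x2, H_1, ..., H_n): X_s + x_i X_p = psi_i d/dx_i with psi_1 not depending
   on x2 and psi_2 not depending on x1 *)
Definition separating_coordinates {R : realType} {n : nat} (U : set (Pt R n))
  (Xp Xs : Pt R n -> Pt R n) (x1 x2 : Pt R n -> R) (H : 'I_n -> Pt R n -> R) :=
  exists psi1 psi2 : Pt R n -> R,
    forall Y1 Y2 : Pt R n -> Pt R n,
      coord_field U (coords x1 x2 H) idx0 Y1 ->
      coord_field U (coords x1 x2 H) idx1 Y2 ->
      forall x, U x ->
        [/\ Xs x + x1 x *: Xp x = psi1 x *: Y1 x,
            Xs x + x2 x *: Xp x = psi2 x *: Y2 x,
            differentiable psi1 x /\ differentiable psi2 x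
          & 'D_(Y2 x) psi1 x = 0 /\ 'D_(Y1 x) psi2 x = 0].

(* Main.v *)
Set Warnings "-all".

Require Import Defs.
From HB Require Import structures.
From mathcomp Require Import all_boot all_order all_algebra.
From mathcomp Require Import all_classical all_reals all_analysis.
From mathcomp Require Import ring.
Import Order.TTheory GRing.Theory Num.Theory.
Import numFieldNormedType.Exports.
Local Open Scope classical_set_scope.
Local Open Scope ring_scope.

Section S.
Variables (R : realType) (n : nat).
Implicit Types (f g : Pt R n -> R) (X : Pt R n -> Pt R n) (U : set (Pt R n)).

Definition Lx X f : Pt R n -> R :=
  fun y => \sum_(j < n.+2) X y 0 j * 'D_(delta_mx 0 j : Pt R n) f y.

Lemma Dlin f (x u v : Pt R n) (a : R) : differentiable f x ->
  'D_(a *: u + v) f x = a * 'D_u f x + 'D_v f x.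
Proof. by move=> df; rewrite !deriveE // linearD linearZ. Qed.

Lemma Dsum f (x v : Pt R n) : differentiable f x ->
  'D_v f x = \sum_(j < n.+2) v 0 j * 'D_(delta_mx 0 j : Pt R n) f x.
Proof.
move=> df; rewrite {1}(row_sum_delta v) deriveE // linear_sum.
by apply: eq_bigr => j _; rewrite linearZ -deriveE.
Qed.

Lemma lieE X f y : differentiable f y -> lie X f y = Lx X f y.
Proof. by move=> df; rewrite /lie Dsum. Qed.

Lemma Lx_diff U X f y : smooth_field U X -> smooth_on U f -> U y ->
  differentiable (Lx X f) y.
Proof.
move=> sX sf Uy.
have -> : Lx X f = \sum_(j < n.+2) ((fun z => X z 0 j) * (fun z => 'D_(delta_mx 0 j : Pt R n) f z)).
  by apply/funext => z; rewrite /Lx fct_sumE.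
apply: differentiable_sum => j; apply: differentiableM.
  exact: (sX j [::] y Uy).
exact: (sf [:: delta_mx 0 j] y Uy).
Qed.

Lemma nearU U (x : Pt R n) : open U -> U x -> \forall y \near x, U y.
Proof. by move=> oU Ux; apply: open_nbhs_nbhs. Qed.

Lemma D_lie U X f (x v : Pt R n) : open U -> U x -> smooth_on U f ->
  'D_v (lie X f) x = 'D_v (Lx X f) x.
Proof.
move=> oU Ux sf; apply: near_eq_derive.
near=> y; apply: lieE; apply: (sf [::]).
near: y; exact: nearU.
Unshelve. all: by end_near.
Qed.

Lemma D_zero U g (x v : Pt R n) : open U -> U x -> (forall y, U y -> g y = 0) ->
  'D_v g x = 0.
Proof.
move=> oU Ux g0; rewrite (near_eq_derive (g := cst 0)) ?derive_cst //.
near=> y; rewrite g0 //; near: y; exact: nearU.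
Unshelve. all: by end_near.
Qed.


Lemma vec_unique (phi : 'I_n.+2 -> Pt R n -> R) (x : Pt R n) :
  (forall k, differentiable (phi k) x) -> indep_at x phi ->
  forall v, (forall k, 'D_v (phi k) x = 0) -> v = 0.
Proof.
move=> dphi ind v hv.
pose M : 'M[R]_(n.+2) := \matrix_(k, j) 'D_(delta_mx 0 j : Pt R n) (phi k) x.
have hD w k : 'D_w (phi k) x = (w *m M^T) 0 k.
  rewrite Dsum // mxE; apply: eq_bigr => j _; by rewrite !mxE.
have ker (c : 'rV[R]_(n.+2)) : c *m M = 0 -> c = 0.
  move=> cM; apply/rowP => k; rewrite mxE.
  apply: (ind (fun k => c 0 k)) => w.
  have -> : \sum_(i < n.+2) c 0 i * 'D_w (phi i) x = ((w *m M^T) *m c^T) 0 0.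
    rewrite mxE; apply: eq_bigr => i _; by rewrite hD !mxE mulrC.
  by rewrite -mulmxA -trmx_mul cM trmx0 mulmx0 mxE.
have rf : row_free M.
  rewrite -kermx_eq0; apply/eqP; apply/row_matrixP => i; rewrite row0.
  by apply: ker; rewrite -row_mul mulmx_ker row0.
have uM : M^T \in unitmx by rewrite unitmx_tr -row_free_unit.
have vM : v *m M^T = 0 by apply/rowP => k; rewrite -hD hv mxE.
by rewrite -(mulmxK uM v) vM mul0mx.
Qed.


Lemma scalRE (a b : R) : a *: b = a * b.
Proof. by []. Qed.

Lemma coords0 x1 x2 (H : 'I_n -> Pt R n -> R) : coords x1 x2 H idx0 = x1.
Proof. by rewrite /coords; case: splitP => [j /= hj|i /= hi] //; rewrite -hj. Qed.

Lemma coords1 x1 x2 (H : 'I_n -> Pt R n -> R) : coords x1 x2 H idx1 = x2.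
Proof. by rewrite /coords; case: splitP => [j /= hj|i /= hi] //; rewrite -hj. Qed.

Lemma coordsP x1 x2 (H : 'I_n -> Pt R n -> R) (k : 'I_n.+2) :
  [\/ k = idx0, k = idx1 | exists i, [/\ coords x1 x2 H k = H i, k != idx0 & k != idx1]].
Proof.
rewrite /coords; case: splitP => [j hj|i hi].
  case: j hj => [[|[|//]] /= lt hk].
    by apply: Or31; apply: val_inj.
  by apply: Or32; apply: val_inj.
apply: Or33; exists i; split => //; apply/negP => /eqP/(congr1 val) /=; rewrite hi //.
Qed.

End S.
Lemma alg1 (R : fieldType) (E F G Es Fs Gs Ep Fp Gp a b s q : R) :
 E != 0 -> a != b -> E*a^+2+F*a+G=0 -> E*b^+2+F*b+G=0 ->
 E*Fs - F*Es = E*Gp - G*Ep -> E*Gs - G*Es = F*Gp - G*Fp ->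
 Es*b^+2 + E*(2*b*s) + Fs*b + F*s + Gs = 0 -> Ep*b^+2 + E*(2*b*q) + Fp*b + F*q + Gp = 0 ->
 s + a*q = 0.
Proof.
move=> E0 ab ra rb C1 C2 Ds Dp.
have hF : F = -(E*(a+b)).
  apply/eqP; rewrite -addr_eq0; apply/eqP.
  have : (a-b)*(E*(a+b)+F) = 0 by rewrite -[RHS](subrr 0) -{1}ra -rb; ring.
  by move/eqP; rewrite mulf_eq0 subr_eq0 (negbTE ab) /= => /eqP; rewrite addrC.
have hG : G = E*a*b.
  by apply/eqP; rewrite -subr_eq0 -ra hF; apply/eqP; ring.
subst F G.
have key : E*((Es*b^+2 + E*(2*b*s) + Fs*b + -(E*(a+b))*s + Gs) + a*(Ep*b^+2 + E*(2*b*q) + Fp*b + -(E*(a+b))*q + Gp))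
   - b*((E*Fs - -(E*(a+b))*Es) - (E*Gp - E*a*b*Ep)) - ((E*Gs - E*a*b*Es) - (-(E*(a+b))*Gp - E*a*b*Fp))
   = (s + a*q)*(E*E*(b-a)) by ring.
move: key; rewrite Ds Dp C1 C2 => key.
have : (s + a*q)*(E*E*(b-a)) == 0 by rewrite -key; apply/eqP; ring.
have ba : (b - a == 0) = false by apply/negbTE; rewrite subr_eq0 eq_sym.
by rewrite !mulf_eq0 (negbTE E0) ba /= !orbF => /eqP.

Qed.

Lemma alg2 (R : comRingType) (SS PS SP PP s1 p1 s2 p2 a b : R) :
  SS + (b*SP + p1*s2) = 0 -> PS + (b*PP + p1* p2) = 0 ->
  s2 + a* p2 = 0 -> s1 + b* p1 = 0 -> PS = SP ->
  (SS + (a*SP + p1*s1)) + b*(PS + (a*PP + p1* p1)) = 0.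
Proof.
move=> E1 E2 A B C.
have -> : (SS + (a*SP + p1*s1)) + b*(PS + (a*PP + p1* p1)) =
  (SS + (b*SP + p1*s2)) + a*(PS + (b*PP + p1* p2)) + p1*(s1 + b* p1) - p1*(s2 + a* p2)
  + (a - b)*(SP - PS) by ring.
by rewrite E1 E2 A B C subrr !mulr0 !addr0 subrr.
Qed.

Arguments Lx_diff {R n U X f y}.
Arguments lieE {R n} X {f y}.
Arguments D_lie {R n U} X {f x} v.
Arguments D_zero {R n U g x} v.
Arguments alg1 {R E F G Es Fs Gs Ep Fp Gp a b s q}.
Arguments alg2 {R SS PS SP PP s1 p1 s2 p2 a b}.

Theorem proposition1 (R : realType) (n : nat) (U : set 'rV[R]_(n.+2))
    (Xp Xs : 'rV[R]_(n.+2) -> 'rV[R]_(n.+2)) (H : 'I_n -> 'rV[R]_(n.+2) -> R)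
    (E F G x1 x2 : 'rV[R]_(n.+2) -> R) :
  open U ->
  smooth_field U Xp -> smooth_field U Xs ->
  (forall x, U x -> forall a b : R, a *: Xp x + b *: Xs x = 0 -> a = 0 /\ b = 0) ->
  commute_on U Xp Xs ->
  (forall i, smooth_on U (H i)) ->
  (forall i, first_integral U Xp (H i) /\ first_integral U Xs (H i)) ->
  (forall x, U x -> indep_at x H) ->
  smooth_on U E -> smooth_on U F -> smooth_on U G ->
  (forall x, U x -> E x != 0) ->
  (forall x, U x ->
     E x * lie Xs F x - F x * lie Xs E x = E x * lie Xp G x - G x * lie Xp E x) ->
  (forall x, U x ->
     E x * lie Xs G x - G x * lie Xs E x = F x * lie Xp G x - G x * lie Xp F x) ->
  smooth_on U x1 -> smooth_on U x2 ->
  (forall x, U x -> E x * x1 x ^+ 2 + F x * x1 x + G x = 0) ->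
  (forall x, U x -> E x * x2 x ^+ 2 + F x * x2 x + G x = 0) ->
  (forall x, U x -> x1 x != x2 x) ->
  (forall x, U x -> indep_at x (coords x1 x2 H)) ->
  separating_coordinates U Xp Xs x1 x2 H.
Proof.
move=> oU sXp sXs indXY comm sH fiH indH sE sF sG E0 C1 C2 s1 s2 r1 r2 d12 indC.
have dif f : smooth_on U f -> forall y, U y -> differentiable f y.
  by move=> sf y Uy; apply: (sf [::] y Uy).
have stepA xa xb : smooth_on U xa -> smooth_on U xb ->
    (forall y, U y -> E y * xa y ^+ 2 + F y * xa y + G y = 0) ->
    (forall y, U y -> E y * xb y ^+ 2 + F y * xb y + G y = 0) ->
    (forall y, U y -> xa y != xb y) ->
    forall y, U y -> lie Xs xb y + xa y * lie Xp xb y = 0.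
  move=> sa sb ra rb dab y Uy.
  have dE := dif _ sE y Uy; have dF := dif _ sF y Uy; have dG := dif _ sG y Uy.
  have db := dif _ sb y Uy.
  have Dq v : 'D_v E y * xb y ^+ 2 + E y * (2 * xb y * 'D_v xb y) + 'D_v F y * xb y
      + F y * 'D_v xb y + 'D_v G y = 0.
    { rewrite -(@D_zero R n U (E * (xb * xb) + F * xb + G) y v oU Uy); last first.
      move=> z Uz /=; rewrite -(rb z Uz) expr2 //.
    rewrite !deriveD ?deriveM ?scalRE /=; first (rewrite (_ : (xb * xb) y = xb y ^+ 2) //; ring).
    all: by apply: diff_derivable; repeat (apply: differentiableD || apply: differentiableM). }
  have h := alg1 (E0 y Uy) (dab y Uy) (ra y Uy) (rb y Uy) (C1 y Uy) (C2 y Uy) (Dq (Xs y)) (Dq (Xp y)).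
  exact: h.
have A1 := stepA x1 x2 s1 s2 r1 r2 d12.
have d21 : forall y, U y -> x2 y != x1 y by move=> y Uy; rewrite eq_sym; exact: d12.
have B1 := stepA x2 x1 s2 s1 r2 r1 d21.

pose L1s := Lx R n Xs x1; pose L1p := Lx R n Xp x1.
pose L2s := Lx R n Xs x2; pose L2p := Lx R n Xp x2.
exists (L1s + x1 * L1p), (L2s + x2 * L2p).
move=> Y1 Y2 cY1 cY2 x Ux.
have dx1 := dif _ s1 x Ux; have dx2 := dif _ s2 x Ux.
have dL X f : smooth_field U X -> smooth_on U f -> differentiable (Lx R n X f) x.
  by move=> sX sf; apply: (Lx_diff sX sf Ux).
have dC k : differentiable (coords x1 x2 H k) x.
  by case: (coordsP R n x1 x2 H k) => [->|->|[i [-> _ _]]]; rewrite ?coords0 ?coords1 //; apply: dif.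
have dpsi1 : differentiable (L1s + x1 * L1p) x.
  by apply: differentiableD; [apply: dL|apply: differentiableM => //; apply: dL].
have dpsi2 : differentiable (L2s + x2 * L2p) x.
  by apply: differentiableD; [apply: dL|apply: differentiableM => //; apply: dL].
have psi1E : (L1s + x1 * L1p) x = lie Xs x1 x + x1 x * lie Xp x1 x by rewrite /= !lieE.
have psi2E : (L2s + x2 * L2p) x = lie Xs x2 x + x2 x * lie Xp x2 x by rewrite /= !lieE.
have eq1 : Xs x + x1 x *: Xp x = (L1s + x1 * L1p) x *: Y1 x.
  apply/eqP; rewrite -subr_eq0; apply/eqP.
  apply: (@vec_unique R n (coords x1 x2 H) x dC (indC x Ux)) => k.
  rewrite deriveE // linearB linearD !linearZ /= -!deriveE // !scalRE.
  case: (coordsP R n x1 x2 H k) => [->|->|[i [ch k0 k1]]]; rewrite cY1 //.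
  - by rewrite coords0 psi1E mulrN mulr1n mulr1 subrr.
  - by rewrite coords1 (_ : (idx1 == idx0 :> 'I_n.+2) = false) // mulrN mulr0n mulr0 subr0; apply: A1.
  - rewrite (negbTE k0) mulrN mulr0n mulr0 subr0 ch.
    by have [hp hs] := fiH i; rewrite [X in X + _]hs // [X in _ * X]hp // mulr0 addr0.
have eq2 : Xs x + x2 x *: Xp x = (L2s + x2 * L2p) x *: Y2 x.
  apply/eqP; rewrite -subr_eq0; apply/eqP.
  apply: (@vec_unique R n (coords x1 x2 H) x dC (indC x Ux)) => k.
  rewrite deriveE // linearB linearD !linearZ /= -!deriveE // !scalRE.
  case: (coordsP R n x1 x2 H k) => [->|->|[i [ch k0 k1]]]; rewrite cY2 //.
  - by rewrite coords0 (_ : (idx0 == idx1 :> 'I_n.+2) = false) // mulrN mulr0n mulr0 subr0; apply: B1.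
  - by rewrite coords1 psi2E mulrN mulr1n mulr1 subrr.
  - rewrite (negbTE k1) mulrN mulr0n mulr0 subr0 ch.
    by have [hp hs] := fiH i; rewrite [X in X + _]hs // [X in _ * X]hp // mulr0 addr0.
have p1n0 : (L1s + x1 * L1p) x != 0.
  apply/negP => /eqP h0; move: eq1; rewrite h0 scale0r => h.
  have := indXY x Ux (x1 x) 1; rewrite scale1r addrC h => /(_ erefl) [_ /eqP].
  by rewrite oner_eq0.
have p2n0 : (L2s + x2 * L2p) x != 0.
  apply/negP => /eqP h0; move: eq2; rewrite h0 scale0r => h.
  have := indXY x Ux (x2 x) 1; rewrite scale1r addrC h => /(_ erefl) [_ /eqP].
  by rewrite oner_eq0.
have Y1x : Y1 x = ((L1s + x1 * L1p) x)^-1 *: (Xs x + x1 x *: Xp x).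
  by rewrite eq1 scalerA mulVf // scale1r.
have Y2x : Y2 x = ((L2s + x2 * L2p) x)^-1 *: (Xs x + x2 x *: Xp x).
  by rewrite eq2 scalerA mulVf // scale1r.
have der f : differentiable f x -> forall v, derivable f x v.
  by move=> df v; apply: diff_derivable.
have DP xa xb (sa : smooth_on U xa) (sb : smooth_on U xb) v :
    'D_v (Lx R n Xs xb + xa * Lx R n Xp xb) x =
    'D_v (lie Xs xb) x + (xa x * 'D_v (lie Xp xb) x + lie Xp xb x * 'D_v xa x).
  have da := dif _ sa x Ux; have db := dif _ sb x Ux.
  rewrite deriveD ?deriveM ?scalRE.
  { by rewrite !(D_lie _ _ oU Ux sb) (lieE _ db). }
  1-4: apply: der; repeat (apply: differentiableD || apply: differentiableM); try apply: dL; done.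
have DB v : 'D_v (lie Xs x1) x + (x2 x * 'D_v (lie Xp x1) x + lie Xp x1 x * 'D_v x2 x) = 0.
  rewrite -DP //; apply: (D_zero _ oU Ux) => z Uz /=.
  change (Lx R n Xs x1 z + x2 z * Lx R n Xp x1 z = 0).
  by rewrite -!lieE; [apply: B1|apply: dif..].
have DA v : 'D_v (lie Xs x2) x + (x1 x * 'D_v (lie Xp x2) x + lie Xp x2 x * 'D_v x1 x) = 0.
  rewrite -DP //; apply: (D_zero _ oU Ux) => z Uz /=.
  change (Lx R n Xs x2 z + x1 z * Lx R n Xp x2 z = 0).
  by rewrite -!lieE; [apply: A1|apply: dif..].
split => //.
split.
  rewrite Y2x deriveE // linearZ linearD linearZ -!deriveE // /= !scalRE !DP //.
  by rewrite (alg2 (DB (Xs x)) (DB (Xp x)) (A1 x Ux) (B1 x Ux) (comm x1 s1 x Ux)) mulr0.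
rewrite Y1x deriveE // linearZ linearD linearZ -!deriveE // /= !scalRE !DP //.
by rewrite (alg2 (DA (Xs x)) (DA (Xp x)) (B1 x Ux) (A1 x Ux) (comm x2 s2 x Ux)) mulr0.
Qed.
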